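(* Let $u,v,p,q,r>1$ satisfy $\frac1u+\frac1v=1$ and $\frac1{u(p-1)}+\frac1{v(q-1)}=\frac1{r-1}$, let $p',q',r'$ be the conjugate exponents of $p,q,r$, and put $\alpha=\frac{q'}{v\sqrt{p'q'r'}}$, $\beta=\frac{r'}{\sqrt{p'q'r'}}$, $\gamma=\frac{p'}{u\sqrt{p'q'r'}}$. Then for all $s,t>0$, $$\frac{p^{1/p}q^{1/q}}{r^{1/r}}\cdot\frac{s^{1/p}t^{1/q}}{(s+t+\beta^2)^{1/r'}(\gamma^2s+\alpha^2t+st)^{1/r}}\le v^{\frac1r-\frac1p}u^{\frac1r-\frac1q},$$ with equality if and only if $s=\frac1{pv}$ and $t=\frac1{qu}$. In particular the supremum over $s,t>0$ of the left-hand side equals $v^{\frac1r-\frac1p}u^{\frac1r-\frac1q}$. *)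

(* Defs.v *)
From Stdlib Require Import Reals.
Open Scope R_scope.

Definition conj_exp (p : R) : R := p / (p - 1).

Definition lhs10 (u v p q r s t : R) : R :=
  let p' := conj_exp p in let q' := conj_exp q in let r' := conj_exp r in
  let D := sqrt (p' * q' * r') in
  let alpha := q' / (v * D) in
  let beta := r' / D in
  let gamma := p' / (u * D) in
  (Rpower p (1/p) * Rpower q (1/q) / Rpower r (1/r)) *
  (Rpower s (1/p) * Rpower t (1/q) /
   (Rpower (s + t + beta^2) (1/r') *
    Rpower (gamma^2 * s + alpha^2 * t + s * t) (1/r))).

Definition rhs10 (u v p q r : R) : R :=
  Rpower v (1/r - 1/p) * Rpower u (1/r - 1/q).

(* Main.v *)
Require Import Defs.
From Stdlib Require Import Reals Lra.
Open Scope R_scope.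

Lemma ln_div' x y : 0 < x -> 0 < y -> ln (x / y) = ln x - ln y.
Proof. intros hx hy. unfold Rdiv. rewrite ln_mult, ln_Rinv; try lra.
  apply Rinv_0_lt_compat; lra. Qed.

Lemma ln_le_sub1 z : 0 < z -> ln z <= z - 1.
Proof. intros hz. pose proof (exp_ineq1_le (ln z)) as H. rewrite exp_ln in H; lra. Qed.

Lemma ln_eq_sub1 z : 0 < z -> ln z = z - 1 -> z = 1.
Proof. intros hz he. destruct (Req_dec (ln z) 0) as [h0|h0].
  - rewrite <- (exp_ln z hz), h0. apply exp_0.
  - pose proof (exp_ineq1 _ h0) as H. rewrite exp_ln in H; lra. Qed.

Lemma amgm_term w z M : 0 < w -> 0 < z -> 0 < M ->
  w * ln z - w * ln M <= w * (z / M) - w /\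
  (w * ln z - w * ln M = w * (z / M) - w -> z = M).
Proof. intros hw hz hM.
  assert (hzM : 0 < z / M) by (apply Rdiv_lt_0_compat; lra).
  pose proof (ln_le_sub1 _ hzM) as H. rewrite ln_div' in H by lra. split.
  - replace (w * ln z - w * ln M) with (w * (ln z - ln M)) by ring.
    replace (w * (z / M) - w) with (w * (z / M - 1)) by ring.
    apply Rmult_le_compat_l; lra.
  - intros he. assert (e2 : ln z - ln M = z / M - 1).
    { apply (Rmult_eq_reg_l w); [|lra]. lra. }
    rewrite <- ln_div' in e2 by lra. apply ln_eq_sub1 in e2; [|lra].
    apply (Rmult_eq_reg_r (/ M)); [|apply Rgt_not_eq, Rinv_0_lt_compat; lra].
    rewrite Rinv_r by lra. exact e2. Qed.

Lemma amgm3 w1 w2 w3 z1 z2 z3 : 0 < w1 -> 0 < w2 -> 0 < w3 -> w1 + w2 + w3 = 1 ->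
  0 < z1 -> 0 < z2 -> 0 < z3 ->
  w1 * ln z1 + w2 * ln z2 + w3 * ln z3 <= ln (w1 * z1 + w2 * z2 + w3 * z3) /\
  (w1 * ln z1 + w2 * ln z2 + w3 * ln z3 = ln (w1 * z1 + w2 * z2 + w3 * z3) ->
   z1 = z3 /\ z2 = z3).
Proof. intros h1 h2 h3 hs k1 k2 k3.
  set (M := w1 * z1 + w2 * z2 + w3 * z3).
  assert (hM : 0 < M).
  { unfold M. assert (0 < w1*z1) by (apply Rmult_lt_0_compat; lra).
    assert (0 < w2*z2) by (apply Rmult_lt_0_compat; lra).
    assert (0 < w3*z3) by (apply Rmult_lt_0_compat; lra). lra. }
  destruct (amgm_term w1 z1 M h1 k1 hM) as [a1 b1].
  destruct (amgm_term w2 z2 M h2 k2 hM) as [a2 b2].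
  destruct (amgm_term w3 z3 M h3 k3 hM) as [a3 b3].
  assert (e1 : w1 * (z1 / M) + w2 * (z2 / M) + w3 * (z3 / M) = 1).
  { unfold M in *. field. lra. }
  assert (e2 : w1 * ln M + w2 * ln M + w3 * ln M = ln M).
  { replace (w1 * ln M + w2 * ln M + w3 * ln M) with ((w1+w2+w3) * ln M) by ring.
    rewrite hs; ring. }
  split; [lra|]. intros he.
  assert (z1 = M) by (apply b1; lra).
  assert (z2 = M) by (apply b2; lra).
  assert (z3 = M) by (apply b3; lra). split; congruence. Qed.

Lemma assemble (ip iq ir iR s0 t0 mu1 mu2 mu3 lp lq lr lu lv ls lt lA lB lBn : R) :
  iR = 1 - ir -> s0 * iR + (mu1 + mu3) * ir = ip -> t0 * iR + (mu2 + mu3) * ir = iq ->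
  lB = - (lr + lu + lv) + lBn ->
  ip * lp + iq * lq - ir * lr + (ip * ls + iq * lt - (iR * lA + ir * lB)) =
  ((ir - ip) * lv + (ir - iq) * lu) -
  ((lA - (s0 * (ls + (lp + lv)) + t0 * (lt + (lq + lu)) + 0)) * iR +
   (lBn - (mu1 * (ls + (lp + lv)) + mu2 * (lt + (lq + lu)) +
           mu3 * ((ls + (lp + lv)) + (lt + (lq + lu))))) * ir).
Proof. intros -> <- <- ->. ring. Qed.
Lemma ids (u v p q r : R) :
  1 < u -> 1 < v -> 1 < p -> 1 < q -> 1 < r ->
  1/u + 1/v = 1 ->
  1/(u*(p-1)) + 1/(v*(q-1)) = 1/(r-1) ->
  let P := p/(p-1) in let Q := q/(q-1) in let Rr := r/(r-1) in
  let b2 := Rr/(P*Q) in let g2 := P/(u^2*Q*Rr) in let a2 := Q/(v^2*P*Rr) in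
  1/(p*v) + 1/(q*u) + b2 = 1 /\
  g2/(p*v) + a2/(q*u) + 1/(p*v)*(1/(q*u)) = 1/(r*u*v) /\
  (1/(p*v))/Rr + (g2/(p*v) + 1/(p*v)*(1/(q*u))) * (r*u*v) / r = 1/p /\
  (1/(q*u))/Rr + (a2/(q*u) + 1/(p*v)*(1/(q*u))) * (r*u*v) / r = 1/q.
Proof.
  intros hu hv hp hq hr h1 h2 P Q Rr b2 g2 a2.
  assert (Hv : v = u/(u-1)).
  { assert (E : u*v*(1/u+1/v) = u*v) by (rewrite h1; ring).
    replace (u*v*(1/u+1/v)) with (v+u) in E by (field; lra).
    apply (Rmult_eq_reg_r (u-1)); [|lra]. field_simplify; lra. }
  assert (Hr : r = 1 + 1/(1/(u*(p-1)) + 1/(v*(q-1)))).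
  { rewrite h2. field. lra. }
  assert (hu1 : u - 1 <> 0) by lra.
  unfold b2, g2, a2, P, Q, Rr. clear b2 g2 a2 P Q Rr.
  subst r. subst v. clear h1 h2 hr hv.
  repeat split; field; repeat split; try lra.
all: apply Rgt_not_eq; assert (0<(u-1)*(p-1)) by (apply Rmult_lt_0_compat; lra); assert (0<(p-1)*((q-1)*u)) by (repeat apply Rmult_lt_0_compat; lra); lra.
Qed.
Theorem mainTheorem10 (u v p q r : R) :
  1 < u -> 1 < v -> 1 < p -> 1 < q -> 1 < r ->
  1/u + 1/v = 1 ->
  1/(u*(p-1)) + 1/(v*(q-1)) = 1/(r-1) ->
  (forall s t : R, 0 < s -> 0 < t ->
     lhs10 u v p q r s t <= rhs10 u v p q r /\
     (lhs10 u v p q r s t = rhs10 u v p q r <-> s = 1/(p*v) /\ t = 1/(q*u))) /\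
  is_lub (fun y => exists s t, 0 < s /\ 0 < t /\ y = lhs10 u v p q r s t)
         (rhs10 u v p q r).
Proof.
  intros hu hv hp hq hr h1 h2.
  pose proof (ids u v p q r hu hv hp hq hr h1 h2) as I. cbv zeta in I.
  destruct I as [i1 [i2 [i3 i4]]].
  set (Rt := (1/r - 1/p) * ln v + (1/r - 1/q) * ln u).
  assert (Hrhs : rhs10 u v p q r = exp Rt).
  { unfold rhs10, Rpower, Rt. rewrite <- exp_plus. f_equal; ring. }
  assert (main : forall s t, 0 < s -> 0 < t -> exists g,
     lhs10 u v p q r s t = exp (Rt - g) /\ 0 <= g /\
     (g = 0 <-> s = 1/(p*v) /\ t = 1/(q*u))).
  { intros s t hs ht. unfold lhs10, conj_exp. cbv zeta.
    set (P := p/(p-1)) in *. set (Q := q/(q-1)) in *. set (Rr := r/(r-1)) in *.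
    assert (hP : 0 < P) by (apply Rdiv_lt_0_compat; lra).
    assert (hQ : 0 < Q) by (apply Rdiv_lt_0_compat; lra).
    assert (hR : 0 < Rr) by (apply Rdiv_lt_0_compat; lra).
    assert (eR : 1/Rr = 1 - 1/r) by (unfold Rr; field; lra).
    clearbody P Q Rr.
    set (D := sqrt (P*Q*Rr)).
    assert (hPQR : 0 < P*Q*Rr) by (repeat apply Rmult_lt_0_compat; lra).
    assert (HD : D*D = P*Q*Rr) by (apply sqrt_sqrt; lra).
    assert (hD : 0 < D) by (apply sqrt_lt_R0; lra).
    assert (eb : (Rr/D)^2 = Rr/(P*Q)).
    { replace ((Rr/D)^2) with (Rr^2/(D*D)) by (field; lra). rewrite HD. field; lra. }
    assert (eg : (P/(u*D))^2 = P/(u^2*Q*Rr)).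
    { replace ((P/(u*D))^2) with (P^2/(u^2*(D*D))) by (field; lra). rewrite HD. field; lra. }
    assert (ea : (Q/(v*D))^2 = Q/(v^2*P*Rr)).
    { replace ((Q/(v*D))^2) with (Q^2/(v^2*(D*D))) by (field; lra). rewrite HD. field; lra. }
    rewrite eb, eg, ea. clearbody D. 
    assert (hb2 : 0 < Rr/(P*Q)) by (apply Rdiv_lt_0_compat; [lra| apply Rmult_lt_0_compat; lra]).
    assert (hg2 : 0 < P/(u^2*Q*Rr)) by (apply Rdiv_lt_0_compat; [lra| repeat apply Rmult_lt_0_compat; try apply pow_lt; lra]).
    assert (ha2 : 0 < Q/(v^2*P*Rr)) by (apply Rdiv_lt_0_compat; [lra| repeat apply Rmult_lt_0_compat; try apply pow_lt; lra]).
    set (b2 := Rr/(P*Q)) in *. set (g2 := P/(u^2*Q*Rr)) in *. set (a2 := Q/(v^2*P*Rr)) in *.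
    clearbody b2 g2 a2.
    assert (hpv : 0 < p*v) by (apply Rmult_lt_0_compat; lra).
    assert (hqu : 0 < q*u) by (apply Rmult_lt_0_compat; lra).
    assert (hruv : 0 < r*u*v) by (repeat apply Rmult_lt_0_compat; lra).
    assert (hs0 : 0 < 1/(p*v)) by (apply Rdiv_lt_0_compat; lra).
    assert (ht0 : 0 < 1/(q*u)) by (apply Rdiv_lt_0_compat; lra).
    set (x := s*(p*v)). set (y := t*(q*u)).
    assert (hx : 0 < x) by (apply Rmult_lt_0_compat; lra).
    assert (hy : 0 < y) by (apply Rmult_lt_0_compat; lra).
    set (mu1 := g2/(p*v)*(r*u*v)). set (mu2 := a2/(q*u)*(r*u*v)).
    set (mu3 := 1/(p*v)*(1/(q*u))*(r*u*v)).
    assert (hm1 : 0 < mu1) by (apply Rmult_lt_0_compat; [apply Rdiv_lt_0_compat|]; lra).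
    assert (hm2 : 0 < mu2) by (apply Rmult_lt_0_compat; [apply Rdiv_lt_0_compat|]; lra).
    assert (hm3 : 0 < mu3) by (apply Rmult_lt_0_compat; [apply Rmult_lt_0_compat|]; lra).
    assert (hmu : mu1 + mu2 + mu3 = 1).
    { unfold mu1, mu2, mu3.
      replace (g2/(p*v)*(r*u*v) + a2/(q*u)*(r*u*v) + 1/(p*v)*(1/(q*u))*(r*u*v))
        with ((g2/(p*v) + a2/(q*u) + 1/(p*v)*(1/(q*u)))*(r*u*v)) by ring.
      rewrite i2. field. lra. }
    assert (c1 : 1/(p*v) * (1/Rr) + (mu1 + mu3) * (1/r) = 1/p).
    { rewrite <- i3. unfold mu1, mu3. field. lra. }
    assert (c2 : 1/(q*u) * (1/Rr) + (mu2 + mu3) * (1/r) = 1/q).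
    { rewrite <- i4. unfold mu2, mu3. field. lra. }
    set (A := s + t + b2).
    assert (eA : A = 1/(p*v) * x + 1/(q*u) * y + b2 * 1) by (unfold A, x, y; field; lra).
    set (B := g2 * s + a2 * t + s * t).
    set (Bn := mu1 * x + mu2 * y + mu3 * (x * y)).
    assert (eB : B = 1/(r*u*v) * Bn) by (unfold B, Bn, mu1, mu2, mu3, x, y; field; lra).
    assert (hBn : 0 < Bn).
    { unfold Bn. assert (0 < mu1*x) by (apply Rmult_lt_0_compat; lra).
      assert (0 < mu2*y) by (apply Rmult_lt_0_compat; lra).
      assert (0 < mu3*(x*y)) by (repeat apply Rmult_lt_0_compat; lra). lra. }
    destruct (amgm3 (1/(p*v)) (1/(q*u)) b2 x y 1 hs0 ht0 hb2 i1 hx hy Rlt_0_1) as [AM1 AM1e].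
    destruct (amgm3 mu1 mu2 mu3 x y (x*y) hm1 hm2 hm3 hmu hx hy (Rmult_lt_0_compat _ _ hx hy))
      as [AM2 AM2e].
    rewrite <- eA in AM1, AM1e. fold Bn in AM2, AM2e.
    assert (lnx : ln x = ln s + (ln p + ln v)) by (unfold x; rewrite !ln_mult; lra).
    assert (lny : ln y = ln t + (ln q + ln u)) by (unfold y; rewrite !ln_mult; lra).
    assert (lnxy : ln (x*y) = ln x + ln y) by (rewrite ln_mult; lra).
    assert (lnB : ln B = - (ln r + ln u + ln v) + ln Bn).
    { rewrite eB, ln_mult, ln_div', ln_1, !ln_mult; try lra.
      all: first [apply Rmult_lt_0_compat; lra | apply Rdiv_lt_0_compat; lra]. }
    rewrite ln_1, lnx, lny in AM1, AM1e. rewrite lnxy, lnx, lny in AM2, AM2e.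
    set (g1 := ln A - (1/(p*v) * (ln s + (ln p + ln v)) + 1/(q*u) * (ln t + (ln q + ln u)) + 0)).
    set (g2' := ln Bn - (mu1 * (ln s + (ln p + ln v)) + mu2 * (ln t + (ln q + ln u)) +
           mu3 * ((ln s + (ln p + ln v)) + (ln t + (ln q + ln u))))).
    assert (hg1 : 0 <= g1) by (unfold g1; rewrite Rmult_0_r in AM1; lra).
    assert (hg2' : 0 <= g2') by (unfold g2'; lra).
    assert (hiR : 0 < 1/Rr) by (apply Rdiv_lt_0_compat; lra).
    assert (hir : 0 < 1/r) by (apply Rdiv_lt_0_compat; lra).
    exists (g1 * (1/Rr) + g2' * (1/r)). split; [|split].
    - unfold Rpower.
      transitivity (exp (1/p * ln p + 1/q * ln q - 1/r * ln r +
                         (1/p * ln s + 1/q * ln t - (1/Rr * ln A + 1/r * ln B)))).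
      + unfold Rminus. rewrite !exp_plus, !exp_Ropp, !exp_plus.
        field. repeat split; apply Rgt_not_eq, exp_pos.
      + f_equal. unfold Rt, g1, g2'.
        apply assemble; try assumption.
    - assert (0 <= g1 * (1/Rr)) by (apply Rmult_le_pos; lra).
      assert (0 <= g2' * (1/r)) by (apply Rmult_le_pos; lra). lra.
    - split.
      + intros hg0.
        assert (0 <= g1 * (1/Rr)) by (apply Rmult_le_pos; lra).
        assert (0 <= g2' * (1/r)) by (apply Rmult_le_pos; lra).
        assert (e1 : g1 * (1/Rr) = 0) by lra.
        apply Rmult_integral in e1. destruct e1 as [e1|e1]; [|lra].
        destruct AM1e as [ex ey]. { unfold g1 in e1. rewrite Rmult_0_r. lra. }
        unfold x in ex; unfold y in ey. split.
        * apply (Rmult_eq_reg_r (p*v)); [|lra]. rewrite ex. field. lra.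
        * apply (Rmult_eq_reg_r (q*u)); [|lra]. rewrite ey. field. lra.
      + intros [es et].
        assert (hx1 : x = 1) by (unfold x; rewrite es; field; lra).
        assert (hy1 : y = 1) by (unfold y; rewrite et; field; lra).
        assert (lx0 : ln s + (ln p + ln v) = 0) by (rewrite <- lnx, hx1; apply ln_1).
        assert (ly0 : ln t + (ln q + ln u) = 0) by (rewrite <- lny, hy1; apply ln_1).
        assert (hA1 : ln A = 0).
        { rewrite eA, hx1, hy1. replace (1/(p*v)*1 + 1/(q*u)*1 + b2*1) with 1 by lra. apply ln_1. }
        assert (hB1 : ln Bn = 0).
        { unfold Bn. rewrite hx1, hy1. replace (mu1*1 + mu2*1 + mu3*(1*1)) with 1 by lra. apply ln_1. }
        unfold g1, g2'. rewrite lx0, ly0, hA1, hB1. ring. }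
  split.
  - intros s t hs ht. destruct (main s t hs ht) as [g [e [hg hiff]]].
    rewrite e, Hrhs. split.
    + destruct hg as [hg|hg].
      * left. apply exp_increasing. lra.
      * right. rewrite <- hg. f_equal. ring.
    + rewrite <- hiff. split.
      * intros he. apply exp_inv in he. lra.
      * intros ->. f_equal. ring.
  - assert (hs0 : 0 < 1/(p*v)) by (apply Rdiv_lt_0_compat; [lra| apply Rmult_lt_0_compat; lra]).
    assert (ht0 : 0 < 1/(q*u)) by (apply Rdiv_lt_0_compat; [lra| apply Rmult_lt_0_compat; lra]).
    split.
    + intros y [s [t [hs [ht ->]]]]. destruct (main s t hs ht) as [g [e [hg hiff]]].
      rewrite e, Hrhs. destruct hg as [hg|hg].
      * left. apply exp_increasing. lra.
      * right. rewrite <- hg. f_equal. ring.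
    + intros b hb. apply hb. exists (1/(p*v)), (1/(q*u)). split; [exact hs0|split; [exact ht0|]].
      destruct (main _ _ hs0 ht0) as [g [e [hg hiff]]].
      assert (g = 0) by (apply hiff; split; reflexivity).
      rewrite e, Hrhs. f_equal. lra.
Qed.
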